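(* Let $n$ be a nonnegative integer, let $p,q$ be nonnegative integers, and let $a,c,a_1,\dots,a_p,b_1,\dots,b_q,x\in\mathbb{C}$ be such that none of $a,\,1+a-c,\,c,\,b_1,\dots,b_q$ is zero or a negative integer. Then \[ {}_{p+3}F_{q+3}\!\left(\left.{-n,\frac{a}{2},\frac{a+1}{2},a_1,\ldots,a_p \atop a,1+a-c,c,b_1,\ldots,b_q}\right| x\right) =\sum_{m=0}^n \frac{(-n)_m(a_1)_m\cdots(a_p)_m\left(\frac{x}{4}\right)^m}{m!\,(1+a-c)_m(b_1)_m\cdots(b_q)_m}\; {}_{p+1}F_{q+1}\!\left(\left.{-n+m,a_1+m,\ldots,a_p+m \atop c,b_1+m,\ldots,b_q+m}\right| \frac{x}{4}\right). \]
   Context: For $a\in\mathbb{C}$, the rising factorial is $(a)_0=1$ and $(a)_k=a(a+1)\cdots(a+k-1)$ for $k\ge1$. For nonnegative integers $r,s$, the hypergeometric series is ${}_rF_s\!\left(\left.{\alpha_1,\ldots,\alpha_r\atop \beta_1,\ldots,\beta_s}\right|z\right)=\sum_{k\ge0}\frac{(\alpha_1)_k\cdots(\alpha_r)_k}{k!(\beta_1)_k\cdots(\beta_s)_k}z^k$, where no lower parameter $\beta_j$ is zero or a negative integer. If some upper parameter equals $-n$ with $n$ a nonnegative integer, the series terminates (is a finite sum over $0\le k\le n$). *)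

(* Defs.v *)
From mathcomp Require Import all_boot all_algebra.
From mathcomp Require Import reals complex.
Set Implicit Arguments. Unset Strict Implicit. Unset Printing Implicit Defensive.
Import GRing.Theory.
Local Open Scope ring_scope.

Definition rising {F : fieldType} (a : F) (k : nat) : F :=
  \prod_(i < k) (a + i%:R).

Definition hyp_term {F : fieldType} (ups lows : seq F) (z : F) (k : nat) : F :=
  (\prod_(al <- ups) rising al k) / (k`!%:R * \prod_(be <- lows) rising be k)
    * z ^+ k.

(* When -N is one of the
   upper parameters (the terminating case of the paper), every term with
   k > N vanishes, so this is exactly the value of the terminating series
   rFs(ups; lows | z). *)
Definition hyp_sum {F : fieldType} (N : nat) (ups lows : seq F) (z : F) : F :=
  \sum_(k < N.+1) hyp_term ups lows z k.

Definition nonpos_int {F : fieldType} (x : F) : Prop :=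
  exists k : nat, x = - (k%:R).

(* Main.v *)
Require Import Defs.
From mathcomp Require Import all_boot all_algebra.
From mathcomp Require Import reals complex.
From mathcomp Require Import ring lra.
Import GRing.Theory Num.Theory.
Local Open Scope ring_scope.

Section H.
Variable F : fieldType.

Lemma risingS (z : F) l : rising z l.+1 = rising z l * (z + l%:R).
Proof. by rewrite /rising big_ord_recr. Qed.

Lemma rising0 (z : F) : rising z 0 = 1.
Proof. by rewrite /rising big_ord0. Qed.

Lemma rising_add (z : F) m j : rising z (m + j) = rising z m * rising (z + m%:R) j.
Proof.
rewrite /rising big_split_ord /=; congr (_ * _).
by apply: eq_bigr => i _; rewrite natrD addrA.
Qed.

Lemma rising_rev (w : F) l : rising (w - l%:R + 1) l = (-1) ^+ l * rising (- w) l.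
Proof.
rewrite /rising (reindex_inj rev_ord_inj) /=.
rewrite -[in (-1)^+l](card_ord l) -prodr_const -big_split /=.
apply: eq_bigr => i _; rewrite /= natrB // -addn1 natrD; ring.
Qed.

End H.
Lemma vandermonde' (F : fieldType) (x y : F) k :
  rising (x + y) k = \sum_(m < k.+1) 'C(k, m)%:R * rising x m * rising y (k - m).
Proof.
elim: k => [|k IH]; first by rewrite big_ord1 !rising0 bin0 mulr1 mul1r.
rewrite risingS IH big_distrl /=.
transitivity (\sum_(m < k.+1) 'C(k, m)%:R * rising x m.+1 * rising y (k - m)
  + \sum_(m < k.+1) 'C(k, m)%:R * rising x m * rising y (k.+1 - m)).
  rewrite -big_split /=; apply: eq_bigr => i _.
  rewrite risingS subSn ?risingS; last by rewrite -ltnS.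
  rewrite natrB; last by rewrite -ltnS.
  ring.
rewrite [in RHS]big_ord_recl /= bin0 rising0 mulr1 mul1r subn0.
under [in RHS]eq_bigr => i _ do rewrite binS natrD subSS mulrDl mulrDl.
rewrite big_split /= addrA addrC; congr (_ + _).
rewrite [in LHS]big_ord_recl /= bin0 rising0 mulr1 mul1r subn0; congr (_ + _).
rewrite [in RHS]big_ord_recr /= bin_small // mul0r mul0r addr0.
by apply: eq_bigr => i _; rewrite subSS.
Qed.
Lemma tri_exchange (V : nmodType) N (g : nat -> nat -> V) :
  \sum_(m < N.+1) \sum_(j < (N - m)%N.+1) g m j
  = \sum_(k < N.+1) \sum_(m < k.+1) g m (k - m)%N.
Proof.
elim: N => [|N IH]; first by rewrite !big_ord1.
rewrite [RHS]big_ord_recr /= -IH.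
under eq_bigr => m _ do rewrite big_ord_recr /=.
rewrite big_split /=; congr (_ + _).
rewrite big_ord_recr /= subnn big_ord0 addr0.
apply: eq_bigr => m _; by rewrite subSn // -ltnS.
Qed.

Section K.
Variable F : numFieldType.
Local Notation r := (@rising F).

Lemma rising_neq0 (z : F) l : ~ nonpos_int z -> r z l != 0.
Proof.
move=> h; rewrite /rising; apply/prodf_neq0 => i _; apply/eqP => e; apply: h.
by exists i; apply/eqP; rewrite -addr_eq0 e.
Qed.

Lemma fact_neq0 l : (l`!)%:R != 0 :> F.
Proof. by rewrite pnatr_eq0 -lt0n fact_gt0. Qed.

Lemma doubling (a : F) k : r (a / 2) k * r ((a + 1) / 2) k * 4 ^+ k = r a k * r (a + k%:R) k.
Proof.
rewrite -rising_add; elim: k => [|k IH]; first by rewrite !rising0 !mulr1.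
have h2 : (2 : F) != 0 by rewrite pnatr_eq0.
rewrite addSn addnS !risingS exprS.
transitivity (r (a / 2) k * r ((a + 1) / 2) k * 4 ^+ k * (4 * (a / 2 + k%:R) * ((a + 1) / 2 + k%:R))).
  ring.
rewrite IH -!mulrA; congr (_ * _).
rewrite -[(k + k).+1]addn1 !natrD; by field.
Qed.

Lemma conv_id (a c : F) k :
  \sum_(m < k.+1) 'C(k, m)%:R * r (1 + a - c + m%:R) (k - m) * r (c + (k - m)%:R) m
  = r (a + k%:R) k.
Proof.
set w1 := a - c + k%:R; set w2 := c + k%:R - 1; set w3 := a + k%:R + k%:R - 1.
rewrite (_ : a + k%:R = w3 - k%:R + 1); last by rewrite /w3; ring.
rewrite rising_rev (_ : - w3 = - w2 + - w1); last by rewrite /w1 /w2 /w3; ring.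
rewrite vandermonde' big_distrr; apply: eq_bigr => [[m hm]] _ /=.
have hmk : (m <= k)%N by rewrite -ltnS.
rewrite (_ : 1 + a - c + m%:R = w1 - (k - m)%:R + 1); last by rewrite natrB // /w1; ring.
rewrite (_ : c + (k - m)%:R = w2 - m%:R + 1); last by rewrite natrB // /w2; ring.
rewrite !rising_rev (_ : (-1) ^+ k = (-1) ^+ (k - m) * (-1) ^+ m :> F); last by rewrite -exprD subnK.
ring.
Qed.

End K.

Section K2.
Variable F : numFieldType.
Local Notation r := (@rising F).

Lemma sum_inv (a c : F) k : ~ nonpos_int (1 + a - c) -> ~ nonpos_int c ->
  \sum_(m < k.+1) (m`!%:R * (k - m)`!%:R * r (1 + a - c) m * r c (k - m))^-1
  = r (a + k%:R) k / (k`!%:R * r (1 + a - c) k * r c k).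
Proof.
move=> he hc; rewrite -(@conv_id F a c k) big_distrl; apply: eq_bigr => [[m hm]] _ /=.
have hmk : (m <= k)%N by rewrite -ltnS.
have E1 : r (1 + a - c) k = r (1 + a - c) m * r (1 + a - c + m%:R) (k - m).
  by rewrite -rising_add subnKC.
have E2 : r c k = r c (k - m) * r (c + (k - m)%:R) m by rewrite -rising_add subnK.
have E3 : (k`!)%:R = 'C(k, m)%:R * ((m`!)%:R * ((k - m)`!)%:R) :> F.
  by rewrite -!natrM bin_fact.
have hC : 'C(k, m)%:R != 0 :> F by rewrite pnatr_eq0 -lt0n bin_gt0.
have := @rising_neq0 F _ k he; rewrite E1 mulf_eq0 negb_or => /andP[h1 h3].
have := @rising_neq0 F _ k hc; rewrite E2 mulf_eq0 negb_or => /andP[h2 h6].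
have h4 := @fact_neq0 F m; have h5 := @fact_neq0 F (k - m).
rewrite E3.
by field; rewrite h1 h2 h3 h4 h5 h6 hC.
Qed.
End K2.

Section K3.
Variable F : fieldType.
Local Notation r := (@rising F).

Lemma summand n (a c x : F) As Bs k m : (m <= k)%N ->
 (r (- n%:R) m * (\prod_(al <- As) r al m) * (x / 4) ^+ m)
      / (m`!%:R * r (1 + a - c) m * \prod_(be <- Bs) r be m)
      * hyp_term ((- n%:R + m%:R) :: [seq al + m%:R | al <- As])
                 (c :: [seq be + m%:R | be <- Bs]) (x / 4) (k - m)
 = r (- n%:R) k * (\prod_(al <- As) r al k) / (\prod_(be <- Bs) r be k) * (x / 4) ^+ k
   * (m`!%:R * (k - m)`!%:R * r (1 + a - c) m * r c (k - m))^-1.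
Proof.
move=> hmk; rewrite /hyp_term !big_cons !big_map.
have eP : forall S : seq F, \prod_(al <- S) r al k
   = \prod_(al <- S) r al m * \prod_(al <- S) r (al + m%:R) (k - m).
  move=> S; rewrite -big_split; by apply: eq_bigr => al _ /=; rewrite -rising_add subnKC.
rewrite !eP.
rewrite (_ : r (- n%:R) k = r (- n%:R) m * r (- n%:R + m%:R) (k - m)); last first.
  by rewrite -rising_add subnKC.
rewrite (_ : (x / 4) ^+ k = (x / 4) ^+ m * (x / 4) ^+ (k - m)); last first.
  by rewrite -exprD subnKC.
rewrite !invfM.
ring.
Qed.
End K3.

Section K4.
Variable F : numFieldType.
Local Notation r := (@rising F).

Lemma perk n (a c x : F) As Bs k :
  ~ nonpos_int a -> ~ nonpos_int (1 + a - c) -> ~ nonpos_int c ->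
  (forall b, b \in Bs -> ~ nonpos_int b) ->
  hyp_term ([:: - n%:R; a / 2; (a + 1) / 2] ++ As) ([:: a; 1 + a - c; c] ++ Bs) x k
  = \sum_(m < k.+1)
      (r (- n%:R) m * (\prod_(al <- As) r al m) * (x / 4) ^+ m)
      / (m`!%:R * r (1 + a - c) m * \prod_(be <- Bs) r be m)
      * hyp_term ((- n%:R + m%:R) :: [seq al + m%:R | al <- As])
                 (c :: [seq be + m%:R | be <- Bs]) (x / 4) (k - m).
Proof.
move=> ha he hc hB.
rewrite (eq_bigr (fun m : 'I_k.+1 =>
   r (- n%:R) k * (\prod_(al <- As) r al k) / (\prod_(be <- Bs) r be k) * (x / 4) ^+ k
   * (m`!%:R * (k - m)`!%:R * r (1 + a - c) m * r c (k - m))^-1)); last first.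
  by move=> [m hm] _ /=; rewrite summand // -ltnS.
rewrite -big_distrr /= sum_inv //.
rewrite /hyp_term /= !big_cons.
have hQ : \prod_(be <- Bs) r be k != 0.
  rewrite prodf_seq_neq0; apply/allP => b hb /=; exact: (@rising_neq0 F _ k (hB b hb)).
have D := @doubling F a k.
have h4 : (4 : F) ^+ k != 0 by rewrite expf_neq0 // pnatr_eq0.
have D' : r (a / 2) k * r ((a + 1) / 2) k = r a k * r (a + k%:R) k / 4 ^+ k.
  by rewrite -D mulfK.
have h1 := @rising_neq0 F _ k ha; have h2 := @rising_neq0 F _ k he.
have h3 := @rising_neq0 F _ k hc; have h5 := @fact_neq0 F k.
rewrite expr_div_n [rising (a / 2) k * _]mulrA D'.
by field; rewrite h1 h2 h3 h4 h5 hQ.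
Qed.
End K4.

Theorem proposition3p1 (R : realType) (n : nat) (a c x : R[i]) (As Bs : seq R[i]) :
  ~ nonpos_int a -> ~ nonpos_int (1 + a - c) -> ~ nonpos_int c ->
  (forall b, b \in Bs -> ~ nonpos_int b) ->
  hyp_sum n ([:: - n%:R; a / 2; (a + 1) / 2] ++ As) ([:: a; 1 + a - c; c] ++ Bs) x
  = \sum_(m < n.+1)
      (rising (- n%:R) m * (\prod_(al <- As) rising al m) * (x / 4) ^+ m)
      / (m`!%:R * rising (1 + a - c) m * \prod_(be <- Bs) rising be m)
      * hyp_sum (n - m) ((- n%:R + m%:R) :: [seq al + m%:R | al <- As])
                 (c :: [seq be + m%:R | be <- Bs]) (x / 4).
Proof.
move=> ha he hc hB.
rewrite /hyp_sum.
under [RHS]eq_bigr => m _ do rewrite big_distrr /=.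
rewrite (@tri_exchange _ n (fun m j =>
      (rising (- n%:R) m * (\prod_(al <- As) rising al m) * (x / 4) ^+ m)
      / (m`!%:R * rising (1 + a - c) m * \prod_(be <- Bs) rising be m)
      * hyp_term ((- n%:R + m%:R) :: [seq al + m%:R | al <- As])
                 (c :: [seq be + m%:R | be <- Bs]) (x / 4) j)).
apply: eq_bigr => k _.
exact: perk.
Qed.
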